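(* Let $m=p_1^{m_1}\cdots p_k^{m_k}$ and let $(K_n,\alpha)$ be an edge-labeled complete graph over $\mathbb{Z}/m\mathbb{Z}$ with ordered edge labels $a_1,\dots,a_{r_n}$, each a positive divisor of $m$ representing a zero divisor of $\mathbb{Z}/m\mathbb{Z}$. (1) Suppose $a_{r_n}\mid a_{r_n-1}\mid\cdots\mid a_1\mid m$ and $m\ne a_1$. Let $H$ be a spanning subgraph of $K_n$ that is either the wheel with hub $v_1$ (i.e. $v_1$ is adjacent to all other vertices and $v_2,\dots,v_n$ form a cycle) or the star with central vertex $v_1$, with edge labels inherited from $(K_n,\alpha)$. Then the set consisting of $(1,\dots,1)$ and, for $j=2,\dots,n$, the vector with $a_{r_{j-1}+1}$ at $v_j$ and $0$ elsewhere, which is a minimum flow-up generating set of $[\mathbb{Z}/m\mathbb{Z}]_{(K_n,\alpha)}$, is also a minimum flow-up generating set of $[\mathbb{Z}/m\mathbb{Z}]_{(H,\alpha)}$. (2) Suppose $a_1\mid a_2\mid\cdots\mid a_{r_n}\mid m$ and $m\ne a_{r_n}$. Let $H$ be a spanning subgraph of $K_n$ that is either the wheel with hub $v_n$ or the star with central vertex $v_n$, with inherited edge labels. Then the set consisting of $(1,\dots,1)$ and, for $j=2,\dots,n$, the vector with entries $a_{r_n-(n-j)}$ at $v_j,\dots,v_n$ and $0$ at $v_1,\dots,v_{j-1}$, which is a minimum flow-up generating set of $[\mathbb{Z}/m\mathbb{Z}]_{(K_n,\alpha)}$, is also a minimum flow-up generating set of $[\mathbb{Z}/m\mathbb{Z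}]_{(H,\alpha)}$.
   Context: A spline on an edge-labeled graph $(G,\alpha)$ over $\mathbb{Z}/m\mathbb{Z}$ (edges labeled by nonzero ideals) is a vector $(f_{v_1},\dots,f_{v_n})\in(\mathbb{Z}/m\mathbb{Z})^n$ with $f_{v_i}-f_{v_j}\in\alpha(v_iv_j)$ for every edge; the splines form a $\mathbb{Z}$-module $[\mathbb{Z}/m\mathbb{Z}]_{(G,\alpha)}$. An $i$-th flow-up class is a spline with $f_{v_i}\ne0$ and $f_{v_t}=0$ for $t<i$. A minimum flow-up generating set is a generating set of the $\mathbb{Z}$-module of smallest possible size consisting of flow-up classes. $K_n$ is the complete graph on $v_1,\dots,v_n$; $r_k=k(k-1)/2$; for $1\le j<k\le n$ the edge $v_jv_k$ is $e_{r_{k-1}+j}$. ''Ordered edge labels $a_1,\dots,a_{r_n}$'' means $\alpha(e_s)$ is the ideal generated by $a_s+m\mathbb{Z}$. *)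

(* Defs.v *)
From HB Require Import structures.
From mathcomp Require Import all_boot all_order all_algebra.
Set Implicit Arguments. Unset Strict Implicit. Unset Printing Implicit Defensive.
Import Order.TTheory GRing.Theory Num.Theory.
Local Open Scope ring_scope.

Definition rr (k : nat) : nat := (k * k.-1) %/ 2.

(* Vertices v_1..v_n are represented 0-based by i : 'I_n (v_{i+1}).
   Ordered edge labels a_1 .. a_{r_n} are given by a : nat -> nat (1-based).
   For 1 <= j < k <= n, edge v_j v_k is e_{r_{k-1}+j}; in 0-based indices
   i < k this is index rr k + i + 1. *)
Definition edge_label (n : nat) (a : nat -> nat) (i k : 'I_n) : nat :=
  if (i < k)%N then a (rr k + i + 1)%N else a (rr i + k + 1)%N.

Definition in_ideal (m : nat) (b : nat) (x : 'Z_m) : Prop :=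
  exists c : 'Z_m, x = c * (b%:R).

Definition is_spline (m n : nat) (E : rel 'I_n) (a : nat -> nat)
  (f : {ffun 'I_n -> 'Z_m}) : Prop :=
  forall i k : 'I_n, i != k -> E i k -> in_ideal (edge_label a i k) (f i - f k).

Definition complete_graph (n : nat) : rel 'I_n := fun i k => i != k.

Definition star_graph (n : nat) (h : nat) : rel 'I_n :=
  fun i k => (i != k) && ((val i == h) || (val k == h)).

(* wheel with hub v_1 (index 0); rim cycle v_2 ... v_n (indices 1..n-1) *)
Definition wheel_first (n : nat) : rel 'I_n :=
  fun i k => (i != k) &&
    [|| val i == 0%N, val k == 0%N,
        (0 < val i)%N && (0 < val k)%N && (((val i).+1 == val k) || ((val k).+1 == val i)),
        (val i == 1%N) && (val k == n.-1) | (val k == 1%N) && (val i == n.-1)].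

(* wheel with hub v_n (index n-1); rim cycle v_1 ... v_{n-1} (indices 0..n-2) *)
Definition wheel_last (n : nat) : rel 'I_n :=
  fun i k => (i != k) &&
    [|| val i == n.-1, val k == n.-1,
        (val i < n.-1)%N && (val k < n.-1)%N && (((val i).+1 == val k) || ((val k).+1 == val i)),
        (val i == 0%N) && (val k == n.-2) | (val k == 0%N) && (val i == n.-2)].

Definition flow_up_at (m n : nat) (i : 'I_n) (f : {ffun 'I_n -> 'Z_m}) : Prop :=
  f i != 0 /\ forall t : 'I_n, (t < i)%N -> f t = 0.

Definition is_flow_up (m n : nat) (f : {ffun 'I_n -> 'Z_m}) : Prop :=
  exists i : 'I_n, flow_up_at i f.

Definition generates (m n : nat) (E : rel 'I_n) (a : nat -> nat)
  (S : {set {ffun 'I_n -> 'Z_m}}) : Prop :=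
  (forall g, g \in S -> is_spline E a g) /\
  forall f, is_spline E a f ->
    exists c : {ffun 'I_n -> 'Z_m} -> int, f = \sum_(g in S) g *~ c g.

Definition flow_up_generating_set (m n : nat) (E : rel 'I_n) (a : nat -> nat)
  (S : {set {ffun 'I_n -> 'Z_m}}) : Prop :=
  generates E a S /\ forall g, g \in S -> is_flow_up g.

Definition min_flow_up_generating_set (m n : nat) (E : rel 'I_n) (a : nat -> nat)
  (S : {set {ffun 'I_n -> 'Z_m}}) : Prop :=
  flow_up_generating_set E a S /\
  forall T : {set {ffun 'I_n -> 'Z_m}}, flow_up_generating_set E a T -> (#|S| <= #|T|)%N.

Definition gens_decreasing (m n : nat) (a : nat -> nat) : {set {ffun 'I_n -> 'Z_m}} :=
  [set [ffun _ => 1]] :|: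
  [set [ffun t : 'I_n => if t == j then (a (rr j + 1)%N)%:R else 0] | j : 'I_n & (0 < val j)%N].

Definition gens_increasing (m n : nat) (a : nat -> nat) : {set {ffun 'I_n -> 'Z_m}} :=
  [set [ffun _ => 1]] :|:
  [set [ffun t : 'I_n => if (val j <= val t)%N then (a (rr n - (n - (val j).+1))%N)%:R else 0]
     | j : 'I_n & (0 < val j)%N].

(* Main.v *)
Require Import Defs.
From HB Require Import structures.
From mathcomp Require Import all_boot all_order all_algebra.
From mathcomp Require Import zify.
From mathcomp.algebra_tactics Require Import ring.
Set Implicit Arguments. Unset Strict Implicit. Unset Printing Implicit Defensive.
Import Order.TTheory GRing.Theory Num.Theory.
Local Open Scope ring_scope.

Section LB.
Variables (m n : nat).
Local Notation FF := {ffun 'I_n -> 'Z_m}.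

Lemma psi_sum (Psi : FF -> FF) (T : {set FF}) (c : FF -> int) :
  (forall x y, Psi (x - y) = Psi x - Psi y) ->
  Psi (\sum_(g in T) g *~ c g) = \sum_(g in T) Psi g *~ c g.
Proof.
move=> HP.
have P0 : Psi 0 = 0 by have := HP 0 0; rewrite subrr => ->; rewrite subrr.
have PN x : Psi (- x) = - Psi x by rewrite -sub0r HP P0 sub0r.
have PD x y : Psi (x + y) = Psi x + Psi y.
  by have := HP x (- y); rewrite opprK => ->; rewrite PN opprK.
have PZ x (k : nat) : Psi (x *+ k) = Psi x *+ k.
  by elim: k => [|k IH]; [by rewrite !mulr0n P0|by rewrite !mulrS PD IH].
rewrite (big_morph Psi PD P0); apply: eq_bigr => g _.
case: (c g) => k; first by rewrite -!pmulrn PZ.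
by rewrite !NegzE !mulrNz PN -!pmulrn PZ.
Qed.

Lemma lower_bound (p : nat) (P : FF -> Prop) (Psi : FF -> FF) (T : {set FF}) :
  (1 < m)%N -> (1 < p)%N -> (p %| m)%N ->
  (forall x y, Psi (x - y) = Psi x - Psi y) ->
  (forall f, P f -> Psi f *+ p = 0) ->
  (forall k : {ffun 'I_n -> 'I_p}, exists2 f, P f & Psi f = [ffun i => ((k i : nat) * (m %/ p))%:R]) ->
  (forall g, g \in T -> P g) ->
  (forall f, P f -> exists c : FF -> int, f = \sum_(g in T) g *~ c g) ->
  (n <= #|T|)%N.
Proof.
move=> m1 p1 pm HPsi Hkill Hsurj HT Hgen.
set K := #|T|.
pose s := enum T.
have sz : size s = K by rewrite /s -cardE.
pose F (c : {ffun 'I_K -> 'I_p}) : FF := \sum_(i < K) Psi (nth 0 s i) *+ c i.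
pose V (k : {ffun 'I_n -> 'I_p}) : FF := [ffun i => ((k i : nat) * (m %/ p))%:R].
have mp : (m %/ p * p = m)%N by rewrite divnK.
have mp0 : (0 < m %/ p)%N by rewrite divn_gt0 ?(ltnW p1) // dvdn_leq // ltnW.
have Vinj : injective V.
  move=> k k' /ffunP E; apply/ffunP => i; move: (E i); rewrite !ffunE.
  move/(congr1 val); rewrite /= !val_Zp_nat // !modn_small; last 2 first.
  - by rewrite -{2}mp [X in (_ < X)%N]mulnC ltn_pmul2r // ltn_ord.
  - by rewrite -{2}mp [X in (_ < X)%N]mulnC ltn_pmul2r // ltn_ord.
  by move/eqP; rewrite eqn_pmul2r // => /eqP /val_inj.
have sub : V @: setT \subset F @: setT.
  apply/subsetP => _ /imsetP [k _ ->].
  have [f Pf Ef] := Hsurj k.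
  have [c Ec] := Hgen f Pf.
  have E1 : V k = \sum_(g in T) Psi g *+ `|(c g %% p)%Z|%N.
    rewrite /V -Ef Ec psi_sum //; apply: eq_bigr => g gT.
    rewrite {1}(divz_eq (c g) p) mulrzDr mulrC mulrzA -pmulrn (Hkill _ (HT _ gT)).
    have Z0 (z : int) : (0 : FF) *~ z = 0 by exact: mul0rz.
    by rewrite Z0 add0r pmulrn gez0_abs // modz_ge0 // eqz_nat -lt0n ltnW.
  have lt (i : 'I_K) : (`|(c (nth (0%R : FF) s i) %% p)%Z| < p)%N.
    have p0 : (p%:Z != 0) by rewrite eqz_nat -lt0n ltnW.
    by rewrite -ltz_nat gez0_abs ?modz_ge0 // ltz_pmod // ltz_nat ltnW.
  apply/imsetP; exists [ffun i : 'I_K => Ordinal (lt i)]; first by [].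
  rewrite E1 /F -big_enum -/s (big_nth (0%R : FF)) sz big_mkord.
  by apply: eq_bigr => i _; rewrite ffunE.
have := subset_leq_card sub.
rewrite card_imset // cardsT card_ffun !card_ord => H.
have := leq_trans H (leq_imset_card _ _).
by rewrite cardsT card_ffun !card_ord leq_exp2l.
Qed.
End LB.

Section Gen.
Variables (m n : nat).
Local Notation FF := {ffun 'I_n -> 'Z_m}.

Definition one : FF := [ffun _ => 1].
Definition Hf (G : 'I_n -> FF) (j : 'I_n) : FF := if val j == 0%N then one else G j.

Lemma flow_up_uniq (g : FF) (j k : 'I_n) : flow_up_at j g -> flow_up_at k g -> j = k.
Proof.
move=> [Hj Zj] [Hk Zk]; apply/val_inj/eqP; rewrite eqn_leq.
case: (ltngtP j k) => // [/Zk|/Zj] E; by rewrite E eqxx in Hj Hk.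
Qed.

Lemma gen_sum (i0 : 'I_n) (G : 'I_n -> FF) (d : 'I_n -> nat) :
  (1 < m)%N -> val i0 = 0%N ->
  (forall j, (0 < val j)%N -> flow_up_at j (G j)) ->
  exists c : FF -> int,
    \sum_(g in [set one] :|: [set G j | j : 'I_n & (0 < val j)%N]) g *~ c g
    = \sum_j Hf G j *+ d j.
Proof.
move=> m1 v0 HG.
have one0 : one i0 != 0 by rewrite ffunE oner_eq0.
have Gi0 j : (0 < val j)%N -> G j i0 = 0.
  by move=> j0; apply: (HG j j0).2; rewrite v0.
have notin : one \notin [set G j | j : 'I_n & (0 < val j)%N].
  apply/imsetP => -[j]; rewrite inE => j0 E.
  by move: one0; rewrite E Gi0 ?eqxx.
pose c (g : FF) : int := if g == one then Posz (d i0) else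
  if [pick j | (0 < val j)%N && (G j == g)] is Some j then Posz (d j) else 0.
exists c.
rewrite big_setU1 //= big_imset /=; last first.
  move=> j k; rewrite !inE => j0 k0 E.
  by apply: (flow_up_uniq (HG j j0)); rewrite E; apply: HG.
rewrite [RHS](bigD1 i0) //= /Hf v0 eqxx /c eqxx -pmulrn; congr (_ + _).
apply: eq_big => [j|j j0].
  by rewrite !inE -val_eqE /= v0 lt0n.
rewrite inE in j0; have -> : (G j == one) = false.
  apply/negbTE/eqP => E; move: one0; rewrite -E Gi0 ?eqxx //.
case: pickP => [k /andP [k0 /eqP Ek]|/(_ j)]; last by rewrite j0 eqxx.
have jk : k = j by apply: (flow_up_uniq (HG k k0)); rewrite Ek; apply: HG.
by rewrite jk -pmulrn (negbTE (lt0n_neq0 j0)).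
Qed.

Lemma card_gens (i0 : 'I_n) (G : 'I_n -> FF) :
  val i0 = 0%N ->
  (#|[set one] :|: [set G j | j : 'I_n & (0 < val j)%N]| <= n)%N.
Proof.
move=> v0.
apply: leq_trans (leq_card_setU _ _) _.
rewrite cards1.
apply: leq_trans (leq_add (leqnn 1) (leq_imset_card _ _)) _.
have -> : #|[set j : 'I_n | (0 < val j)%N]| = #|predC1 i0|.
  by apply: eq_card => j; rewrite !inE -val_eqE /= v0 lt0n.
rewrite cardC1 card_ord add1n; have : (0 < n)%N by apply: leq_ltn_trans (ltn_ord i0). 
by case: (n).
Qed.


Lemma Zm_m : (1 < m)%N -> (m%:R : 'Z_m) = 0.
Proof. by move=> m1; apply/val_inj; rewrite /= val_Zp_nat // modnn. Qed.

Lemma generic (E : rel 'I_n) (a : nat -> nat) (i0 : 'I_n) (G : 'I_n -> FF)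
  (p : nat) (b : 'I_n -> nat) (pr : 'I_n -> 'I_n) :
  (1 < m)%N -> val i0 = 0%N -> (1 < p)%N -> (p %| m)%N ->
  (forall j, is_spline E a (Hf G j)) ->
  (forall j, (0 < val j)%N -> flow_up_at j (G j)) ->
  (forall f : FF, is_spline E a f -> exists d : 'I_n -> nat, f = \sum_j Hf G j *+ d j) ->
  (forall i, (0 < val i)%N -> (b i * p %| m)%N) ->
  (forall f : FF, is_spline E a f -> forall i, (0 < val i)%N -> @in_ideal m (b i) (f i - f (pr i))) ->
  (forall k : 'I_n -> nat, exists2 f : FF, is_spline E a f &
      (f i0 = (k i0)%:R /\ forall i, (0 < val i)%N -> f i - f (pr i) = (b i * k i)%:R)) ->
  min_flow_up_generating_set E a ([set one] :|: [set G j | j : 'I_n & (0 < val j)%N]).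
Proof.
move=> m1 v0 p1 pm HS HG Hgen Hb Hid Hsur.
have p0 : (0 < p)%N by apply: ltnW.
have gS : forall g, g \in [set one] :|: [set G j | j : 'I_n & (0 < val j)%N] -> is_spline E a g.
  move=> g /setU1P [->|/imsetP [j]]; first by have := HS i0; rewrite /Hf v0 eqxx.
  rewrite inE => j0 ->; have := HS j; by rewrite /Hf (negbTE (lt0n_neq0 j0)).
split; [split; [split|]|].
- exact: gS.
- move=> f /Hgen [d ->].
  have [c Ec] := gen_sum d m1 v0 HG.
  by exists c; rewrite Ec.
- move=> g /setU1P [->|/imsetP [j]].
    exists i0; split; first by rewrite ffunE oner_eq0.
    by move=> t; rewrite v0.
  by rewrite inE => j0 ->; exists j; apply: HG.
move=> T [[TS Tgen] _].
apply: leq_trans (card_gens G v0) _.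
pose w (i : 'I_n) := if val i == 0%N then (m %/ p)%N else (m %/ (b i * p))%N.
pose Psi (f : FF) : FF :=
  [ffun i => (f i - (if val i == 0%N then 0 else f (pr i))) * (w i)%:R].
apply: (@lower_bound m n p (is_spline E a) Psi T m1 p1 pm) => //.
- move=> x y; apply/ffunP => i; rewrite !ffunE.
  case: ifP => _; rewrite ?ffunE; ring.
- move=> f Pf; apply/ffunP => i; rewrite ffunMnE !ffunE /w.
  case: ifP => i0'.
    by rewrite subr0 -mulrnAr -mulr_natr -natrM divnK // Zm_m // mulr0.
  have [|c ->] := Hid f Pf i; first by rewrite lt0n i0'.
  have bp : (b i * p %| m)%N by apply: Hb; rewrite lt0n i0'.
  rewrite -mulrA -mulrnAr -mulr_natr -!natrM mulnAC mulnC divnK //.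
  by rewrite Zm_m // mulr0.
- move=> k.
  have [f Pf [f0 fS]] := Hsur (fun i => val (k i)).
  exists f => //; apply/ffunP => i; rewrite !ffunE /w.
  case: ifP => i0'.
    have -> : i = i0 by apply/val_inj; rewrite v0; apply/eqP.
    by rewrite subr0 f0 -natrM.
  rewrite fS ?lt0n ?i0' // -natrM; congr (_%:R).
  have bp : (b i * p %| m)%N by apply: Hb; rewrite lt0n i0'.
  rewrite [(b i * _)%N]mulnC -mulnA; congr (_ * _)%N.
  rewrite -{2}(divnK bp) mulnA mulnK //.
  by rewrite mulnC.
Qed.

End Gen.

Lemma rrS k : rr k.+1 = (rr k + k)%N.
Proof.
rewrite /rr /= !divn2 -!bin2.
case: k => [|k] //. by rewrite binS bin1.
Qed.

Lemma rr_mono i j : (i <= j)%N -> (rr i <= rr j)%N.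
Proof.
elim: j => [|j IH]; first by rewrite leqn0 => /eqP ->.
rewrite leq_eqVlt => /orP [/eqP -> //|]; rewrite ltnS => /IH.
by rewrite rrS => H; apply: leq_trans H (leq_addr _ _).
Qed.

Lemma chain_dec (a : nat -> nat) R :
  (forall s : nat, (1 <= s < R)%N -> (a s.+1 %| a s)%N) ->
  forall s t, (1 <= s)%N -> (s <= t)%N -> (t <= R)%N -> (a t %| a s)%N.
Proof.
move=> H s t s1; elim: t => [|t IH]; first by rewrite leqn0 => /eqP E; rewrite E in s1.
rewrite leq_eqVlt => /orP [/eqP <- //|]; rewrite ltnS => st tR.
apply: dvdn_trans (H t _) (IH st (ltnW tR)).
by rewrite tR (leq_trans s1 st).
Qed.

Lemma chain_inc (a : nat -> nat) R :
  (forall s : nat, (1 <= s < R)%N -> (a s %| a s.+1)%N) ->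
  forall s t, (1 <= s)%N -> (s <= t)%N -> (t <= R)%N -> (a s %| a t)%N.
Proof.
move=> H s t s1; elim: t => [|t IH]; first by rewrite leqn0 => /eqP E; rewrite E in s1.
rewrite leq_eqVlt => /orP [/eqP <- //|]; rewrite ltnS => st tR.
apply: dvdn_trans (IH st (ltnW tR)) (H t _).
by rewrite tR (leq_trans s1 st).
Qed.

Section Ideal.
Variables (m n : nat).
Local Notation FF := {ffun 'I_n -> 'Z_m}.

Lemma ideal0 b : @in_ideal m b 0.
Proof. by exists 0; rewrite mul0r. Qed.

Lemma idealD b x y : @in_ideal m b x -> @in_ideal m b y -> @in_ideal m b (x + y).
Proof. by move=> [c ->] [d ->]; exists (c + d); rewrite mulrDl. Qed.

Lemma idealN b x : @in_ideal m b x -> @in_ideal m b (- x).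
Proof. by move=> [c ->]; exists (- c); rewrite mulNr. Qed.

Lemma idealB b x y : @in_ideal m b x -> @in_ideal m b y -> @in_ideal m b (x - y).
Proof. by move=> hx hy; apply: idealD => //; apply: idealN. Qed.

Lemma idealMn b x k : @in_ideal m b x -> @in_ideal m b (x *+ k).
Proof. by move=> [c ->]; exists (c *+ k); rewrite mulrnAl. Qed.

Lemma ideal_nat b k : @in_ideal m b (b * k)%N%:R.
Proof. by exists k%:R; rewrite natrM mulrC. Qed.

Lemma ideal_dvd d b x : (d %| b)%N -> @in_ideal m b x -> @in_ideal m d x.
Proof.
move=> /dvdnP [q ->] [c ->]; exists (c * q%:R).
by rewrite natrM mulrA.
Qed.

Lemma ideal_self b : @in_ideal m b b%:R.
Proof. by exists 1; rewrite mul1r. Qed.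

Lemma spline_pairs (E : rel 'I_n) a (f : FF) :
  (forall i k : 'I_n, i != k -> @in_ideal m (edge_label a i k) (f i - f k)) ->
  is_spline E a f.
Proof. by move=> H i k ik _; apply: H. Qed.

Lemma spline_sum (E : rel 'I_n) a (H : 'I_n -> FF) (d : 'I_n -> nat) :
  (forall j, is_spline E a (H j)) -> is_spline E a (\sum_j H j *+ d j).
Proof.
move=> HS i k ik e; rewrite !sum_ffunE -sumrB.
apply: (big_ind (@in_ideal m _)); first exact: ideal0.
  by move=> x y; apply: idealD.
by move=> j _; rewrite !ffunMnE -mulrnBl; apply/idealMn/HS.
Qed.

Lemma Zm_nat_neq0 x : (1 < m)%N -> (0 < x < m)%N -> (x%:R : 'Z_m) != 0.
Proof.
move=> m1 /andP [x0 xm]; apply/eqP => /(congr1 val).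
by rewrite /= val_Zp_nat // modn_small // => E; rewrite E in x0.
Qed.

End Ideal.

Lemma edge_label_sym n a (i k : 'I_n) : edge_label a i k = edge_label a k i.
Proof.
by rewrite /edge_label; case: ltngtP => // ->.
Qed.

Lemma eidx_le n i k : (i < k)%N -> (k < n)%N -> (rr k + i + 1 <= rr n)%N.
Proof.
move=> ik kn; apply: leq_trans (rr_mono kn); rewrite rrS; lia.
Qed.

Lemma prime_factor m c : (c %| m)%N -> (0 < m)%N -> m <> c ->
  exists p, [/\ (1 < p)%N, (p %| m)%N & (c * p %| m)%N].
Proof.
move=> cm m0 mc; set q := (m %/ c)%N.
have Eq : (q * c)%N = m by rewrite divnK.
have q1 : (1 < q)%N.
  clearbody q; case: q Eq => [|[|k]] E; [rewrite mul0n in E; lia | rewrite mul1n in E; lia | by []].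
exists (pdiv q); split; first by rewrite prime_gt1 // pdiv_prime.
  by apply: dvdn_trans (pdiv_dvd q) _; rewrite -Eq dvdn_mulr.
have c0 : (0 < c)%N by move: Eq m0; case: (c) => [|c'] //; rewrite muln0 => <-.
by rewrite -Eq mulnC dvdn_pmul2r ?pdiv_dvd.
Qed.

Section Dec.
Variables (m n : nat) (a : nat -> nat).
Local Notation FF := {ffun 'I_n -> 'Z_m}.

Definition Gd (j : 'I_n) : FF := [ffun t : 'I_n => if t == j then (a (rr j + 1)%N)%:R else 0].

Lemma sum_dec (i0 : 'I_n) (d : 'I_n -> nat) t : val i0 = 0%N ->
  (\sum_j Hf Gd j *+ d j) t = (d i0)%:R + (if val t == 0%N then 0 else (a (rr t + 1) * d t)%N%:R).
Proof.
move=> v0; rewrite sum_ffunE (bigD1 i0) //= ffunMnE /Hf v0 eqxx /one ffunE.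
congr (_ + _); case: ifP => t0.
  have tE : t = i0 by apply/val_inj; rewrite v0; apply/eqP.
  apply: big1 => j ji0; rewrite -val_eqE v0 in ji0.
  by rewrite (negbTE ji0) ffunMnE ffunE tE -val_eqE v0 eq_sym (negbTE ji0) mul0rn.
have ti0 : t != i0 by rewrite -val_eqE v0 t0.
rewrite (bigD1 t) //= t0 ffunMnE ffunE eqxx big1 ?addr0; last first.
  move=> j /andP [ji0 jt]; rewrite -val_eqE v0 in ji0.
  by rewrite (negbTE ji0) ffunMnE ffunE eq_sym (negbTE jt) mul0rn.
by rewrite natrM mulr_natr.
Qed.

Lemma dec_main (E : rel 'I_n) (i0 : 'I_n) :
  (1 < m)%N -> (2 <= n)%N -> val i0 = 0%N ->
  (forall s : nat, (1 <= s <= rr n)%N -> (1 < a s)%N /\ (a s %| m)%N) ->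
  (forall s : nat, (1 <= s < rr n)%N -> (a s.+1 %| a s)%N) ->
  (a 1%N %| m)%N -> m <> a 1%N ->
  (forall j : 'I_n, j != i0 -> E j i0) ->
  min_flow_up_generating_set E a (@gens_decreasing m n a).
Proof.
move=> m1 n2 v0 Ha Hc a1m ma1 HE.
have [p [p1 pm a1p]] := prime_factor a1m (ltnW m1) ma1.
have idx (j : 'I_n) : (0 < val j)%N -> (1 <= rr j + 1 <= rr n)%N.
  move=> j0; rewrite addn1 ltnS leq0n /=.
  by apply: leq_trans (eidx_le j0 (ltn_ord j)); rewrite addn1 ltnS leq_addr.
have Adv (j : 'I_n) : (0 < val j)%N -> (a (rr j + 1) %| a 1)%N.
  move=> j0; have /andP [h1 h2] := idx j j0.
  by apply: chain_dec Hc _ _ _ h1 h2.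
have rn1 : (1 <= rr n)%N by apply: leq_trans (rr_mono n2).
have a10 : (0 < a 1)%N by have [h _] := Ha 1%N rn1; apply: ltnW.
have a1lt : (a 1 < m)%N.
  by rewrite ltn_neqAle dvdn_leq ?(ltnW m1) // andbT; apply/eqP => E1; apply: ma1.
have Alt (j : 'I_n) : (0 < val j)%N -> (0 < a (rr j + 1) < m)%N.
  move=> j0; have [A1 _] := Ha _ (idx j j0).
  rewrite (ltnW A1) /=; apply: leq_ltn_trans a1lt.
  by apply: dvdn_leq (Adv j j0).
have lab (j : 'I_n) : (0 < val j)%N -> edge_label a j i0 = a (rr j + 1).
  by move=> j0; rewrite /edge_label v0 ltn0 addn0.
have ji0 (j : 'I_n) : (0 < val j)%N -> j != i0.
  by move=> j0; rewrite -val_eqE v0 -lt0n.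
have Ldv (i k j : 'I_n) : i != k -> (0 < val j)%N -> (j == i) || (j == k) ->
    (edge_label a i k %| a (rr j + 1))%N.
  move=> ik j0 jik.
  wlog -> : i k ik jik / j = i.
    move=> W; case/orP: (jik) => /eqP E1; first exact: W ik jik E1.
    by rewrite edge_label_sym; apply: W E1; [rewrite eq_sym | rewrite orbC].
  rewrite /edge_label; case: ltngtP => [jk|kj|/val_inj E1]; last first.
  - by rewrite E1 eqxx in ik.
  - apply: chain_dec Hc _ _ _ _ _; first by rewrite addn1.
      by rewrite -addnA leq_add2l addn1 ltnS leq0n.
    exact: eidx_le kj (ltn_ord _).
  - apply: chain_dec Hc _ _ _ _ _; first by rewrite addn1.
      by have := rr_mono (ltnW jk); lia.
    exact: eidx_le jk (ltn_ord _).
have HS (j : 'I_n) : is_spline E a (Hf Gd j).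
  apply: spline_pairs => s t st; rewrite /Hf; case: ifP => j0.
    by rewrite /one !ffunE subrr; apply: ideal0.
  have j0' : (0 < val j)%N by rewrite lt0n j0.
  rewrite !ffunE; case: eqP => [sj|sj]; case: eqP => [tj|tj].
  - by move: st; rewrite sj tj eqxx.
  - rewrite subr0; apply: ideal_dvd (ideal_self _ _).
    by apply: Ldv => //; rewrite sj eqxx.
  - rewrite sub0r; apply/idealN/ideal_dvd/ideal_self.
    by apply: Ldv => //; rewrite tj eqxx orbT.
  - by rewrite subrr; apply: ideal0.
have HG (j : 'I_n) : (0 < val j)%N -> flow_up_at j (Gd j).
  move=> j0; split; first by rewrite ffunE eqxx; apply: Zm_nat_neq0 => //; apply: Alt.
  by move=> t tj; rewrite ffunE -val_eqE (ltn_eqF tj).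
rewrite /gens_decreasing.
apply: (@generic m n E a i0 Gd p (fun i => a (rr i + 1)%N) (fun _ => i0)) => //.
- move=> f Pf.
  pose d (j : 'I_n) : nat := if val j == 0%N then val (f i0) else
    if [pick c : 'Z_m | f j - f i0 == c * (a (rr j + 1)%N)%:R] is Some c then val c else 0%N.
  exists d; apply/ffunP => t; rewrite (sum_dec _ _ v0) /d v0 eqxx natr_Zp.
  case: ifP => t0; first by rewrite addr0 (_ : t = i0) //; apply/val_inj; rewrite v0; apply/eqP.
  case: pickP => [c /eqP Ec|].
    by rewrite t0 natrM natr_Zp mulrC -Ec addrC subrK.
  have t0' : (0 < val t)%N by rewrite lt0n t0.
  have [c Ec] := Pf t i0 (ji0 t t0') (HE t (ji0 t t0')).
  by move/(_ c); rewrite -lab // Ec eqxx.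
- move=> i i0'; apply: dvdn_trans a1p; apply: dvdn_mul (Adv i i0') (dvdnn _).
- move=> f Pf i i0'; rewrite -lab //; apply: Pf; [exact: ji0 | exact/HE/ji0].
- move=> k; exists (\sum_j Hf Gd j *+ k j); first exact: spline_sum.
  split; first by rewrite (sum_dec _ _ v0) v0 eqxx addr0.
  move=> i i0'; rewrite !(sum_dec _ _ v0) v0 eqxx (negbTE (lt0n_neq0 i0')).
  by rewrite addr0 addrAC subrr add0r.
Qed.
End Dec.

Section Inc.
Variables (m n : nat) (a : nat -> nat).
Local Notation FF := {ffun 'I_n -> 'Z_m}.

Definition Gi (j : 'I_n) : FF :=
  [ffun t : 'I_n => if (val j <= val t)%N then (a (rr n - (n - (val j).+1))%N)%:R else 0].
Definition Bn (j : nat) := a (rr n - (n - j.+1))%N.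
Definition Bp (j : nat) := if j == 0%N then 1%N else Bn j.
Definition prv (i : 'I_n) : 'I_n := Ordinal (leq_ltn_trans (leq_subr 1 i) (ltn_ord i)).

Lemma sum_inc (d : 'I_n -> nat) t :
  (\sum_j Hf Gi j *+ d j) t = \sum_(j : 'I_n | (val j <= val t)%N) (Bp j * d j)%N%:R.
Proof.
rewrite sum_ffunE [RHS]big_mkcond; apply: eq_bigr => j _; rewrite ffunMnE /Hf /Bp.
case: ifP => j0; first by rewrite (eqP j0) /one ffunE leq0n mul1n.
rewrite ffunE; case: ifP => _; last by rewrite mul0rn.
by rewrite natrM mulr_natr.
Qed.

Lemma sum_inc0 (d : 'I_n -> nat) (i0 : 'I_n) : val i0 = 0%N ->
  \sum_(j : 'I_n | (val j <= val i0)%N) (Bp j * d j)%N%:R = (d i0)%:R :> 'Z_m.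
Proof.
move=> v0; rewrite (bigD1 i0) ?v0 //= big1 ?addr0 /Bp ?v0 ?mul1n //.
move=> j /andP [j0 ji0]; move: j0; rewrite leqn0 => /eqP j0.
by move: ji0; rewrite -val_eqE /= v0 j0.
Qed.

Lemma sum_incS (d : 'I_n -> nat) (i : 'I_n) : (0 < val i)%N ->
  \sum_(j : 'I_n | (val j <= val i)%N) (Bp j * d j)%N%:R =
  \sum_(j : 'I_n | (val j <= val (prv i))%N) (Bp j * d j)%N%:R + (Bn i * d i)%N%:R :> 'Z_m.
Proof.
move=> i0; rewrite (bigD1 i) //= addrC /Bp (negbTE (lt0n_neq0 i0)); congr (_ + _).
have i0' : (0 < nat_of_ord i)%N := i0.
apply: eq_bigl => j; rewrite /= -val_eqE /= andbC -ltn_neqAle; apply/idP/idP; lia.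
Qed.


Lemma inc_main (E : rel 'I_n) (i0 hn : 'I_n) :
  (1 < m)%N -> (2 <= n)%N -> val i0 = 0%N -> val hn = n.-1 ->
  (forall s : nat, (1 <= s <= rr n)%N -> (1 < a s)%N /\ (a s %| m)%N) ->
  (forall s : nat, (1 <= s < rr n)%N -> (a s %| a s.+1)%N) ->
  (a (rr n) %| m)%N -> m <> a (rr n) ->
  (forall j : 'I_n, j != hn -> E j hn) ->
  min_flow_up_generating_set E a (@gens_increasing m n a).
Proof.
move=> m1 n2 v0 vh Ha Hc arm mar HE.
have [p [p1 pm arp]] := prime_factor arm (ltnW m1) mar.
have rrn : rr n = (rr n.-1 + n.-1)%N by rewrite -rrS prednK // (ltn_trans _ n2).
have rn1 : (1 <= rr n)%N by apply: leq_trans (rr_mono n2).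
have idxB (j : nat) : (1 <= j <= n.-1)%N -> (rr n - (n - j.+1))%N = (rr n.-1 + j)%N.
  by rewrite rrn; lia.
have idxR (j : nat) : (1 <= j <= n.-1)%N -> (1 <= rr n.-1 + j <= rr n)%N.
  by rewrite rrn; lia.
have Binr (j : nat) : (1 <= j <= n.-1)%N -> (Bn j %| a (rr n))%N.
  move=> jr; rewrite /Bn idxB //; have /andP [h1 h2] := idxR j jr.
  exact: chain_inc Hc _ _ h1 h2 (leqnn _).
have ar0 : (0 < a (rr n))%N by have [h _] := Ha (rr n) (ltac:(by rewrite rn1 leqnn)); apply: ltnW.
have armlt : (a (rr n) < m)%N.
  by rewrite ltn_neqAle dvdn_leq ?(ltnW m1) // andbT; apply/eqP => E1; apply: mar.
have Blt (j : nat) : (1 <= j <= n.-1)%N -> (0 < Bn j < m)%N.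
  move=> jr; have [A1 _] := Ha _ (idxR j jr).
  rewrite /Bn idxB // (ltnW A1) /=; apply: leq_ltn_trans armlt.
  by rewrite -/(Bn j) -(idxB j jr); apply: dvdn_leq (Binr j jr).
have jr (j : 'I_n) : (0 < val j)%N -> (1 <= (j : nat) <= n.-1)%N.
  move=> j0; rewrite j0 /= -ltnS prednK ?ltn_ord //; by apply: leq_ltn_trans (ltn_ord j).
have Ldv (s t : 'I_n) (j : nat) : (s < t)%N -> (s < j)%N -> (j <= t)%N ->
    (edge_label a s t %| Bn j)%N.
  move=> st sj jt.
  have tn : (t <= n.-1)%N by rewrite -ltnS prednK ?ltn_ord // (ltn_trans _ n2).
  rewrite /edge_label st /Bn idxB; last by lia.
  apply: chain_inc Hc _ _ _ _ _; first by rewrite addn1.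
    by have := rr_mono tn; lia.
  by rewrite rrn; lia.
have HS (j : 'I_n) : is_spline E a (Hf Gi j).
  apply: spline_pairs => s t st; rewrite /Hf; case: ifP => j0.
    by rewrite /one !ffunE subrr; apply: ideal0.
  rewrite !ffunE; case: ifP => js; case: ifP => jt.
  - by rewrite subrr; apply: ideal0.
  - rewrite subr0 edge_label_sym; apply/ideal_dvd/ideal_self.
    apply: Ldv; rewrite ?js //; last by rewrite ltnNge jt.
    by apply: (leq_trans _ js); rewrite ltnNge jt.
  - rewrite sub0r; apply/idealN/ideal_dvd/ideal_self.
    apply: Ldv; rewrite ?jt //; last by rewrite ltnNge js.
    by apply: (leq_trans _ jt); rewrite ltnNge js.
  - by rewrite subrr; apply: ideal0.
have HG (j : 'I_n) : (0 < val j)%N -> flow_up_at j (Gi j).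
  move=> j0; split; first by rewrite ffunE leqnn; apply: Zm_nat_neq0 => //; apply: Blt; apply: jr.
  by move=> t tj; rewrite ffunE leqNgt tj.
have vprv (i : 'I_n) : (prv i : nat) = ((i : nat) - 1)%N by [].
have Hid (f : FF) : is_spline E a f -> forall i : 'I_n, (0 < val i)%N ->
    @in_ideal m (Bn i) (f i - f (prv i)).
  move=> Pf i i0'; have [ir1 ir2] := andP (jr i i0').
  have vh' : (hn : nat) = n.-1 := vh.
  have pi : prv i != hn by apply/eqP => /(congr1 (@nat_of_ord n)); rewrite vprv vh'; lia.
  have h1 : @in_ideal m (Bn i) (f (prv i) - f hn).
    have <- : edge_label a (prv i) hn = Bn i.
      rewrite /edge_label vprv vh (_ : (i - 1 < n.-1)%N = true); last by lia.
      rewrite /Bn idxB; [apply: congr1; lia | lia].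
    exact: Pf pi (HE _ pi).
  case: (eqVneq i hn) => [ih|ih].
    have -> : f i = f hn by rewrite ih.
    by rewrite -opprB; apply: idealN.
  have ihl : (i < n.-1)%N.
    rewrite ltn_neqAle ir2 andbT -vh'; apply: contra ih => /eqP E1; apply/eqP/val_inj.
    exact: E1.
  have h2 : @in_ideal m (Bn i.+1) (f i - f hn).
    have <- : edge_label a i hn = Bn i.+1.
      rewrite /edge_label vh ihl /Bn idxB ?addn1; [by rewrite addnS | lia].
    exact: Pf ih (HE _ ih).
  have dv : (Bn i %| Bn i.+1)%N.
    rewrite /Bn !idxB; [|lia|lia].
    by apply: chain_inc Hc _ _ _ _ _; rewrite ?rrn; lia.
  have -> : f i - f (prv i) = (f i - f hn) - (f (prv i) - f hn) by ring.
  by apply: idealB => //; apply: ideal_dvd dv h2.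
rewrite /gens_increasing.
apply: (@generic m n E a i0 Gi p (fun i => Bn i) prv) => //.
- move=> f Pf.
  pose d (j : 'I_n) : nat := if val j == 0%N then val (f i0) else
    if [pick c : 'Z_m | f j - f (prv j) == c * (Bn j)%:R] is Some c then val c else 0%N.
  exists d; apply/ffunP => t; rewrite sum_inc.
  suff : forall k (t : 'I_n), val t = k ->
      \sum_(j : 'I_n | (val j <= val t)%N) (Bp j * d j)%N%:R = f t by move/(_ _ t erefl).
  elim=> [|k IH] {}t tk.
    rewrite (sum_inc0 d tk) /d tk eqxx natr_Zp.
    by congr (f _); apply/val_inj; rewrite v0.
  have t0 : (0 < val t)%N by rewrite tk.
  have tk' : (t : nat) = k.+1 := tk.
  rewrite sum_incS // (IH (prv t)); last by rewrite /= tk' subn1.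
  rewrite /d (negbTE (lt0n_neq0 t0)) tk' /=.
  case: pickP => [c /eqP Ec|].
    by rewrite natrM natr_Zp mulrC -Ec addrC subrK.
  have [c Ec] := Hid f Pf t t0.
  by move/(_ c); rewrite /= -tk' Ec eqxx.
- move=> i i0'; apply: dvdn_trans arp; apply: dvdn_mul (Binr i (jr i i0')) (dvdnn _).
- move=> k; exists (\sum_j Hf Gi j *+ k j); first exact: spline_sum.
  split; first by rewrite sum_inc sum_inc0.
  move=> i i0'; rewrite !sum_inc sum_incS //.
  by rewrite addrAC subrr add0r.
Qed.

End Inc.
Unset Implicit Arguments. Set Strict Implicit.

Theorem mainTheorem7 (m n : nat) (a : nat -> nat)
  (Hm : (1 < m)%N) (Hn : (2 <= n)%N)
  (Ha : forall s : nat, (1 <= s <= rr n)%N -> (1 < a s)%N /\ (a s %| m)%N) :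
  ( (forall s : nat, (1 <= s < rr n)%N -> (a s.+1 %| a s)%N) ->
    (a 1%N %| m)%N -> m <> a 1%N ->
    min_flow_up_generating_set (@complete_graph n) a (@gens_decreasing m n a) /\
    min_flow_up_generating_set (@wheel_first n) a (@gens_decreasing m n a) /\
    min_flow_up_generating_set (@star_graph n 0) a (@gens_decreasing m n a) )
  /\
  ( (forall s : nat, (1 <= s < rr n)%N -> (a s %| a s.+1)%N) ->
    (a (rr n) %| m)%N -> m <> a (rr n) ->
    min_flow_up_generating_set (@complete_graph n) a (@gens_increasing m n a) /\
    min_flow_up_generating_set (@wheel_last n) a (@gens_increasing m n a) /\
    min_flow_up_generating_set (@star_graph n n.-1) a (@gens_increasing m n a) ).
Proof.
have n0 : (0 < n)%N by apply: ltn_trans Hn.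
pose i0 : 'I_n := Ordinal n0.
have hnlt : (n.-1 < n)%N by rewrite prednK.
pose hn : 'I_n := Ordinal hnlt.
split=> Hc a1 ma1.
  have D (E : rel 'I_n) : (forall j : 'I_n, j != i0 -> E j i0) ->
      min_flow_up_generating_set E a (@gens_decreasing m n a).
    by move=> HE; apply: (dec_main (i0 := i0)).
  split; [|split]; apply: D => j ji //=.
  - by rewrite /wheel_first ji /= orbT.
  - by rewrite /star_graph ji /= orbT.
have D (E : rel 'I_n) : (forall j : 'I_n, j != hn -> E j hn) ->
    min_flow_up_generating_set E a (@gens_increasing m n a).
  by move=> HE; apply: (inc_main (i0 := i0) (hn := hn)).
split; [|split]; apply: D => j ji //=.
- by rewrite /wheel_last ji /= eqxx orbT.
- by rewrite /star_graph ji /= eqxx orbT.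
Qed.
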